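(* For any metrized graph $\Gamma$ with $v$ vertices, $$2Kf(\Gamma)= v \cdot y(\Gamma)+\sum_{e_i \in E(\Gamma)} \frac{R_i}{L_i+R_i}\sum_{p \in V(\overline{\Gamma}_i)} r_{\overline{\Gamma}_i}(p,\bar p_i).$$
   Context: A metrized graph $\Gamma$ is a finite connected graph (multiple edges and self-loops allowed) each of whose edges is identified with a closed segment of positive length, with a finite nonempty vertex set $V(\Gamma)$ containing every point of valence $\neq2$; $v=\#V(\Gamma)$, $E(\Gamma)$ its edge set, $L_i$ the length of $e_i$. $r$ (resp. $r_\beta$) denotes effective resistance in $\Gamma$ (resp. in $\beta$), edges being resistors of resistance equal to length. For an edge $e_i$ with end points $p_i,q_i$: if $\Gamma-e_i$ (interior deleted) is connected, $R_i$ is the effective resistance between $p_i,q_i$ in $\Gamma-e_i$, $R_{a_i,p}=\hat j_{p_i}(p,q_i)$, $R_{b_i,p}=\hat j_{q_i}(p,p_i)$, with $\hat j_z(x,y)$ the voltage function of $\Gamma-e_i$ (potential at $x$ when unit current enters at $y$ and exits at $z$, potential $0$ at $z$); if $e_i$ is a bridge, $R_{a_i,p}=0,R_{b_i,p}=R_i$ for $p$ in the component of $\Gamma-e_i$ containing $p_i$, and $R_{a_i,p}=R_i,R_{b_i,p}=0$ otherwise, with every expression in $R_i$ interpreted as its limit as $R_i\to\infty$; for a self-loop $R_i=0$. $Kf(\Gamma)=\frac12\sum_{p,q\in V(\Gamma)}r(p,q)$. $\overline\Gamma_i$ is obtained by contracting $e_i$ to a point, with vertex set the image of $V(\Gamma)$,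 and $\bar p_i$ is the vertex into which $p_i$ (and $q_i$) is contracted. For a fixed vertex $p$ (independent of choice), $y(\Gamma)=\frac14\sum_{e_i}\frac{L_iR_i^2}{(L_i+R_i)^2}+\frac34\sum_{e_i}\frac{L_i(R_{a_i,p}-R_{b_i,p})^2}{(L_i+R_i)^2}$. *)

(* Defs.v *)
(* A metrized graph is modelled combinatorially: a finite
   vertex type V (the vertex set V(Gamma)), a finite edge type E, an endpoint
   map [ends : E -> V * V] (e |-> (p_e, q_e); multiple edges and self-loops
   allowed) and positive lengths [len : E -> R].  Resistances are computed in
   the associated resistor network (edge e = resistor of resistance len e). *)
From HB Require Import structures.
From mathcomp Require Import all_boot all_order all_algebra.
From mathcomp Require Import reals.
From Stdlib Require Import ClassicalEpsilon.

Set Implicit Arguments.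
Unset Strict Implicit.
Unset Printing Implicit Defensive.

Import Order.TTheory GRing.Theory Num.Theory.
Local Open Scope ring_scope.

Section Network.
Variables (R : realType) (V E : finType).
Variables (ends : E -> V * V) (len : E -> R).

Definition adj (F : {set E}) : rel V :=
  fun x y => [exists e in F, (((ends e).1 == x) && ((ends e).2 == y))
                          || (((ends e).1 == y) && ((ends e).2 == x))].

Definition connected_net (S : {set V}) (F : {set E}) : bool :=
  [forall x in S, forall y in S, connect (adj F) x y].

Definition outflow (F : {set E}) (phi : V -> R) (w : V) : R :=
  \sum_(e in F)
     (((ends e).1 == w)%:R * (phi (ends e).1 - phi (ends e).2)
      + ((ends e).2 == w)%:R * (phi (ends e).2 - phi (ends e).1)) / len e.

(* phi is the potential when a unit current enters at y and exits at z,
   grounded (potential 0) at z; potentials off S are set to 0. *)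
Definition is_voltage (S : {set V}) (F : {set E}) (z y : V) (phi : V -> R)
  : Prop :=
  phi z = 0 /\ (forall x, x \notin S -> phi x = 0) /\
  (forall w, w \in S -> outflow F phi w = (w == y)%:R - (w == z)%:R).

(* voltage function  j_z(x,y)  of the network (S,F) (unique when (S,F) is
   connected, z,y in S). *)
Definition voltage (S : {set V}) (F : {set E}) (z y x : V) : R :=
  epsilon (inhabits (fun _ : V => 0 : R)) (is_voltage S F z y) x.

Definition eff_res (S : {set V}) (F : {set E}) (x y : V) : R :=
  voltage S F y x x.

Definition Kf : R :=
  2^-1 * \sum_(p : V) \sum_(q : V) eff_res [set: V] [set: E] p q.

Definition delF (e : E) : {set E} := [set~ e].

Definition is_bridge (e : E) : bool := ~~ connected_net [set: V] (delF e).

Definition Rdel (e : E) : R := eff_res [set: V] (delF e) (ends e).1 (ends e).2.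

Definition Ra (e : E) (p : V) : R :=
  voltage [set: V] (delF e) (ends e).1 (ends e).2 p.
Definition Rb (e : E) (p : V) : R :=
  voltage [set: V] (delF e) (ends e).2 (ends e).1 p.

(* For a bridge, R_i = +oo and the expressions are
   replaced by their limits as R_i -> +oo:
     L R^2/(L+R)^2 -> L,   R/(L+R) -> 1,
     L (R_a - R_b)^2/(L+R)^2 -> L  (since {R_a,R_b} = {0,R_i}). *)
Definition ytermA (e : E) : R :=
  if is_bridge e then len e
  else len e * Rdel e ^+ 2 / (len e + Rdel e) ^+ 2.

Definition ytermB (e : E) (p : V) : R :=
  if is_bridge e then len e
  else len e * (Ra e p - Rb e p) ^+ 2 / (len e + Rdel e) ^+ 2.

Definition weight (e : E) : R :=
  if is_bridge e then 1 else Rdel e / (len e + Rdel e).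

(* y(Gamma), computed with the fixed vertex p *)
Definition y_inv (p : V) : R :=
  4^-1 * \sum_(e : E) ytermA e + (3%:R / 4%:R) * \sum_(e : E) ytermB e p.

(* Contraction Gamma_bar_i of e_i = (a,b): q_i = b is identified with p_i = a
   (nothing happens to vertices if e_i is a self-loop); the vertex set is the
   image of V, edges are E - e_i with endpoints mapped, and bar p_i = a. *)
Definition contr_map (e : E) (x : V) : V :=
  if x == (ends e).2 then (ends e).1 else x.

Definition contr_V (e : E) : {set V} :=
  if (ends e).1 == (ends e).2 then [set: V] else [set~ (ends e).2].

Definition contr_ends (e : E) (e' : E) : V * V :=
  (contr_map e (ends e').1, contr_map e (ends e').2).

End Network.

Definition contr_res (R : realType) (V E : finType) (ends : E -> V * V)
  (len : E -> R) (e : E) (x y : V) : R :=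
  eff_res (contr_ends ends e) len (contr_V ends e) (delF e) x y.

(* Main.v *)
Require Import Defs.
From HB Require Import structures.
From mathcomp Require Import all_boot all_order all_algebra.
From mathcomp Require Import reals.
From mathcomp Require Import ring lra.
From Stdlib Require Import ClassicalEpsilon FunctionalExtensionality.
Set Implicit Arguments.
Unset Strict Implicit.
Unset Printing Implicit Defensive.
Import Order.TTheory GRing.Theory Num.Theory.
Local Open Scope ring_scope.


Section Gen.
Variables (R : realType) (V E : finType).
Variables (ends : E -> V * V) (len : E -> R).
Hypothesis len_pos : forall e, 0 < len e.

Lemma sum_ind (a : V) (f : V -> R) : \sum_w ((a == w)%:R * f w) = f a.
Proof.
rewrite (bigD1 a) //= eqxx mul1r big1 ?addr0 // => w /negbTE.
by rewrite eq_sym => ->; rewrite mul0r.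
Qed.

Lemma key_sum (F : {set E}) (X Y : E -> V -> R) :
  \sum_w \sum_(e in F) (((ends e).1 == w)%:R * X e w + ((ends e).2 == w)%:R * Y e w)
  = \sum_(e in F) (X e (ends e).1 + Y e (ends e).2).
Proof.
rewrite exchange_big; apply: eq_bigr => e _.
by rewrite big_split /= !sum_ind.
Qed.

Lemma energy (F : {set E}) (phi psi : V -> R) :
  \sum_w phi w * outflow ends len F psi w =
  \sum_(e in F) (phi (ends e).1 - phi (ends e).2) * (psi (ends e).1 - psi (ends e).2) / len e.
Proof.
rewrite /outflow.
under eq_bigr => w _ do rewrite mulr_sumr.
rewrite (eq_bigr (fun w => \sum_(e in F) (((ends e).1 == w)%:R *
     (phi w * (psi (ends e).1 - psi (ends e).2) / len e)
   + ((ends e).2 == w)%:R * (phi w * (psi (ends e).2 - psi (ends e).1) / len e)))).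
  rewrite key_sum; apply: eq_bigr => e _; ring.
by move=> w _; apply: eq_bigr => e _; ring.
Qed.

Lemma trace (F : {set E}) (H : V -> V -> R) :
  \sum_w outflow ends len F (H w) w =
  \sum_(e in F) (H (ends e).1 (ends e).1 - H (ends e).1 (ends e).2
     + H (ends e).2 (ends e).2 - H (ends e).2 (ends e).1) / len e.
Proof.
rewrite /outflow.
rewrite (eq_bigr (fun w => \sum_(e in F) (((ends e).1 == w)%:R *
     ((H w (ends e).1 - H w (ends e).2) / len e)
   + ((ends e).2 == w)%:R * ((H w (ends e).2 - H w (ends e).1) / len e)))).
  rewrite key_sum; apply: eq_bigr => e _; ring.
by move=> w _; apply: eq_bigr => e _; ring.
Qed.

Lemma outflow_lin F (f g : V -> R) k w :
  outflow ends len F (fun x => k * f x + g x) w =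
  k * outflow ends len F f w + outflow ends len F g w.
Proof. rewrite /outflow mulr_sumr -big_split; apply: eq_bigr => e _ /=; ring. Qed.

Lemma outflow_cst F (c : R) w : outflow ends len F (fun _ => c) w = 0.
Proof. rewrite /outflow big1 // => e _; rewrite !subrr; ring. Qed.

Lemma outflow_sum0 F f : \sum_w outflow ends len F f w = 0.
Proof.
have := energy F (fun _ => 1) f.
rewrite (eq_bigr (fun w => outflow ends len F f w)); last by move=> w _; rewrite mul1r.
move=> ->; rewrite big1 // => e _; ring.
Qed.


Lemma outflow_sub F (f g : V -> R) w :
  outflow ends len F (fun x => f x - g x) w =
  outflow ends len F f w - outflow ends len F g w.
Proof. rewrite /outflow -sumrB; apply: eq_bigr => e _ /=; ring. Qed.

Lemma connect_const (r : rel V) (f : V -> R) :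
  (forall u v, r u v -> f u = f v) -> forall x y, connect r x y -> f x = f y.
Proof.
move=> H x y /connectP [s Hp ->]; elim: s x Hp => [|z s IH] x //=.
by case/andP=> rxz Hp; rewrite (H _ _ rxz) (IH _ Hp).
Qed.

Lemma hom_zero S F z phi :
  connected_net ends S F -> z \in S -> phi z = 0 ->
  (forall x, x \notin S -> phi x = 0) ->
  (forall w, w \in S -> outflow ends len F phi w = 0) -> forall x, phi x = 0.
Proof.
move=> Gc zS phiz Hoff Hout.
have E0 : \sum_(e in F) (phi (ends e).1 - phi (ends e).2) *
    (phi (ends e).1 - phi (ends e).2) / len e = 0.
  rewrite -energy big1 // => w _; case: (boolP (w \in S)) => wS.
    by rewrite Hout // mulr0.
  by rewrite Hoff // mul0r.
have Hedge : forall e, e \in F -> phi (ends e).1 = phi (ends e).2.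
  move=> e eF.
  have HL := len_pos e.
  have Hn : forall i, i \in F -> 0 <= (phi (ends i).1 - phi (ends i).2) *
    (phi (ends i).1 - phi (ends i).2) / len i.
    by move=> e' _; rewrite divr_ge0 -?expr2 ?sqr_ge0 // ltW.
  have := psumr_eq0P Hn E0 eF.
  rewrite -expr2.
  move=> /eqP; rewrite mulf_eq0 invr_eq0 (gt_eqF HL) orbF sqrf_eq0 subr_eq0.
  by move/eqP.
have Hadj : forall u v, adj ends F u v -> phi u = phi v.
  move=> u v /existsP [e /andP [eF /orP [/andP [/eqP <- /eqP <-] | /andP [/eqP <- /eqP <-]]]];
  by rewrite Hedge.
move=> x; case: (boolP (x \in S)) => xS; last by rewrite Hoff.
have : connect (adj ends F) z x.
  by move/forallP: Gc => /(_ z) /implyP /(_ zS) /forallP /(_ x) /implyP /(_ xS).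
by move/(connect_const Hadj) => <-.
Qed.

Lemma voltage_eq S F z y phi :
  connected_net ends S F -> z \in S -> is_voltage ends len S F z y phi ->
  forall x, voltage ends len S F z y x = phi x.
Proof.
move=> Gc zS Hphi.
have := epsilon_spec (inhabits (fun _ : V => 0 : R)) (is_voltage ends len S F z y)
  (ex_intro _ phi Hphi).
rewrite /voltage; set psi := epsilon _ _ => -[p0 [poff pout]].
case: Hphi => [q0 [qoff qout]].
move=> x; apply/eqP; rewrite -subr_eq0; apply/eqP.
apply: (hom_zero (phi := fun x => psi x - phi x) Gc zS) => /=.
- by rewrite p0 q0 subrr.
- by move=> u uS; rewrite poff // qoff // subrr.
- by move=> w wS; rewrite outflow_sub pout // qout // subrr.
Qed.

Lemma outflow_scale F (f : V -> R) k w :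
  outflow ends len F (fun x => k * f x) w = k * outflow ends len F f w.
Proof. rewrite /outflow mulr_sumr; apply: eq_bigr => e _ /=; ring. Qed.

Lemma adj_sym F : symmetric (adj ends F).
Proof. move=> x y; rewrite /adj; apply: eq_existsb => e; by rewrite orbC. Qed.

End Gen.

Lemma connect_map (T T' : finType) (r1 : rel T) (r2 : rel T') (f : T -> T') :
  (forall u v, r1 u v -> connect r2 (f u) (f v)) ->
  forall x y, connect r1 x y -> connect r2 (f x) (f y).
Proof.
move=> H x y /connectP [s Hp ->]; elim: s x Hp => [|z s IH] x /=.
  by rewrite connect0.
by case/andP=> rxz Hp; apply: connect_trans (H _ _ rxz) (IH _ Hp).
Qed.


Lemma lin_surj (R : fieldType) (V : finType) (T : (V -> R) -> (V -> R)) :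
  (forall k f g, T (fun x => k * f x + g x) = fun x => k * T f x + T g x) ->
  (forall f, T f = (fun _ => 0) -> f = fun _ => 0) ->
  forall b, exists f, T f = b.
Proof.
move=> Tlin Tinj b.
have T0 : T (fun _ => 0) = fun _ => 0.
  have := Tlin 1 (fun _ => 0) (fun _ => 0).
  rewrite (_ : (fun _ => 1 * 0 + 0) = (fun _ : V => 0 : R)); last first.
    by apply: functional_extensionality => x; rewrite mul1r addr0.
  move=> H; apply: functional_extensionality => x.
  have := congr1 (fun f => f x) H => /=; rewrite mul1r => h.
  by apply: (addrI (T (fun _ => 0) x)); rewrite addr0 -h.
pose eb (i : 'I_#|V|) := fun x : V => ((enum_rank x == i)%:R : R).
have Tsum : forall (s : seq 'I_#|V|) (c : 'I_#|V| -> R),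
    T (fun x => \sum_(i <- s) c i * eb i x) = fun x => \sum_(i <- s) c i * T (eb i) x.
  move=> s c; elim: s => [|i s IH].
    rewrite (_ : (fun x : V => \sum_(i <- [::]) c i * eb i x) = fun _ => 0); last first.
      by apply: functional_extensionality => x; rewrite big_nil.
    by rewrite T0; apply: functional_extensionality => x; rewrite big_nil.
  rewrite (_ : (fun x : V => \sum_(j <- i :: s) c j * eb j x) =
     fun x => c i * eb i x + \sum_(j <- s) c j * eb j x); last first.
    by apply: functional_extensionality => x; rewrite big_cons.
  rewrite Tlin IH; apply: functional_extensionality => x; by rewrite big_cons.
pose fv (v : 'rV[R]_#|V|) := fun x : V => v 0 (enum_rank x).
have fvE : forall v, fv v = fun x => \sum_(i <- index_enum 'I_#|V|) v 0 i * eb i x.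
  move=> v; apply: functional_extensionality => x.
  rewrite (bigD1 (enum_rank x)) //= /eb eqxx mulr1 big1 ?addr0 // => i /negbTE.
  by rewrite eq_sym => ->; rewrite mulr0.
pose A := \matrix_(i < #|V|, j < #|V|) T (eb i) (enum_val j).
have mulA : forall v j, (v *m A) 0 j = T (fv v) (enum_val j).
  move=> v j; rewrite mxE fvE Tsum; apply: eq_bigr => i _; by rewrite mxE.
have Afree : row_free A.
  apply: inj_row_free => v vA.
  have : fv v = fun _ => 0.
    apply: Tinj; apply: functional_extensionality => x.
    by rewrite -(enum_rankK x) -mulA vA mxE.
  move=> H; apply/rowP => i; rewrite mxE.
  have := congr1 (fun f => f (enum_val i)) H; by rewrite /fv /= enum_valK.
rewrite row_free_unit in Afree.
pose bv := \row_(j < #|V|) b (enum_val j).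
exists (fv (bv *m invmx A)); apply: functional_extensionality => x.
by rewrite -(enum_rankK x) -mulA mulmxKV // mxE.
Qed.


Section Main.
Variables (R : realType) (V E : finType).
Variables (ends : E -> V * V) (len : E -> R).
Hypothesis len_pos : forall e, 0 < len e.
Hypothesis Gconn : connected_net ends [set: V] [set: E].
Variable p : V.

Let n : R := #|V|%:R.
Lemma n_neq0 : n != 0.
Proof. by rewrite /n pnatr_eq0 -lt0n; apply/card_gt0P; exists p. Qed.

Lemma sum_cst (c : R) : \sum_(x : V) c = n * c.
Proof. by rewrite sumr_const mulr_natl. Qed.

Lemma sum_ind2 (y : V) : \sum_(w : V) ((w == y)%:R : R) = 1.
Proof.
rewrite (bigD1 y) //= eqxx big1 ?addr0 // => w /negbTE -> //.
Qed.

Lemma G_ex y : exists h : V -> R,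
  (forall w, outflow ends len [set: E] h w = (w == y)%:R - n^-1) /\ \sum_x h x = 0.
Proof.
pose T := fun (h : V -> R) w => outflow ends len [set: E] h w + (\sum_u h u) / n.
have Tlin : forall k f g, T (fun x => k * f x + g x) = fun x => k * T f x + T g x.
  move=> k f g; apply: functional_extensionality => w.
  rewrite /T outflow_lin big_split /= -mulr_sumr; ring.
have Tsum : forall h, \sum_w T h w = \sum_u h u.
  move=> h; rewrite /T big_split /= outflow_sum0 add0r sum_cst.
  by rewrite mulrC -mulrA mulVf ?n_neq0 // mulr1.
have Tinj : forall f, T f = (fun _ => 0) -> f = fun _ => 0.
  move=> f Tf.
  have s0 : \sum_u f u = 0 by rewrite -Tsum Tf big1.
  have Of : forall w, outflow ends len [set: E] f w = 0.
    move=> w; have := congr1 (fun g => g w) Tf; rewrite /T /= s0 mul0r addr0 //.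
  have Hc : forall x, f x - f p = 0.
    apply: (@hom_zero R V E ends len len_pos [set: V] [set: E] p
       (fun x => f x - f p)) => //=.
    - by rewrite subrr.
    - by move=> x; rewrite in_setT.
    - by move=> w _; rewrite outflow_sub outflow_cst Of subrr.
  have fc : forall x, f x = f p by move=> x; apply/eqP; rewrite -subr_eq0 Hc.
  have : n * f p = 0 by rewrite -sum_cst -[RHS]s0; apply: eq_bigr => x _; rewrite fc.
  move/eqP; rewrite mulf_eq0 (negbTE n_neq0) /= => /eqP fp0.
  by apply: functional_extensionality => x; rewrite fc.
have [h Th] := lin_surj Tlin Tinj (fun w => (w == y)%:R - n^-1).
have s0 : \sum_u h u = 0.
  rewrite -Tsum Th sumrB sum_ind2 sum_cst mulfV ?n_neq0 // subrr //.
exists h; split => // w.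
have := congr1 (fun g => g w) Th; rewrite /T /= s0 mul0r addr0 //.
Qed.


Definition G (y : V) : V -> R :=
  proj1_sig (constructive_indefinite_description _ (G_ex y)).

Lemma GO y w : outflow ends len [set: E] (G y) w = (w == y)%:R - n^-1.
Proof. by case: (proj2_sig (constructive_indefinite_description _ (G_ex y))). Qed.

Lemma Gsum y : \sum_x G y x = 0.
Proof. by case: (proj2_sig (constructive_indefinite_description _ (G_ex y))). Qed.

Lemma energy_sym F (phi psi : V -> R) :
  \sum_w phi w * outflow ends len F psi w = \sum_w psi w * outflow ends len F phi w.
Proof. rewrite !energy; apply: eq_bigr => e _; ring. Qed.

Lemma sum_ind3 (y : V) (f : V -> R) : \sum_w f w * ((w == y)%:R - n^-1) = f y - n^-1 * \sum_w f w.
Proof.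
rewrite (eq_bigr (fun w => (y == w)%:R * f w - n^-1 * f w)); last first.
  by move=> w _; rewrite eq_sym; ring.
by rewrite sumrB sum_ind mulr_sumr.
Qed.

Lemma Gsym x y : G x y = G y x.
Proof.
have := energy_sym [set: E] (G x) (G y).
under eq_bigr => w _ do rewrite GO.
under [in RHS]eq_bigr => w _ do rewrite GO.
by rewrite !sum_ind3 !Gsum !mulr0 !subr0.
Qed.

Definition J (z y x : V) : R := G y x - G z x - G y z + G z z.

Lemma J_volt z y : is_voltage ends len [set: V] [set: E] z y (J z y).
Proof.
split; first by rewrite /J; ring.
split; first by move=> x; rewrite in_setT.
move=> w _; have := GO y w; have := GO z w; rewrite /outflow => Hz Hy.
rewrite (_ : (w == y)%:R - (w == z)%:R = ((w == y)%:R - n^-1) - ((w == z)%:R - n^-1)); last by ring.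
rewrite -Hy -Hz -sumrB; apply: eq_bigr => e _; rewrite /J; ring.
Qed.

Lemma voltG z y x : voltage ends len [set: V] [set: E] z y x = J z y x.
Proof.
by apply: (@voltage_eq R V E ends len len_pos) => //; exact: J_volt.
Qed.

Lemma effG x y : eff_res ends len [set: V] [set: E] x y = J y x x.
Proof. by rewrite /eff_res voltG. Qed.


Section Edge.
Variable e : E.
Local Notation a := (ends e).1.
Local Notation b := (ends e).2.
Local Notation L := (len e).

Definition re := J b a a.

Lemma L_neq0 : L != 0. Proof. by rewrite gt_eqF. Qed.

Lemma outflow_split phi w :
  outflow ends len [set: E] phi w = outflow ends len (delF e) phi w +
   ((a == w)%:R * (phi a - phi b) + (b == w)%:R * (phi b - phi a)) / L.
Proof.
rewrite /outflow (bigD1 e) ?inE //= addrC; congr (_ + _).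
by apply: eq_bigl => e'; rewrite !inE.
Qed.

Lemma JO z y w : outflow ends len [set: E] (J z y) w = (w == y)%:R - (w == z)%:R.
Proof. by case: (J_volt z y) => _ [_ ->] //; rewrite in_setT. Qed.

Lemma outflow_del_J z y w : (z = a /\ y = b) \/ (z = b /\ y = a) ->
  outflow ends len (delF e) (J z y) w = ((w == y)%:R - (w == z)%:R) * (1 - re / L).
Proof.
move=> H; have := outflow_split (J z y) w; rewrite JO => Hs.
have -> : outflow ends len (delF e) (J z y) w =
  (w == y)%:R - (w == z)%:R - ((a == w)%:R * (J z y a - J z y b) +
   (b == w)%:R * (J z y b - J z y a)) / L by rewrite Hs; ring.
rewrite (eq_sym a) (eq_sym b) /re.
by case: H => [[-> ->]|[-> ->]]; rewrite /J; field; exact: L_neq0.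
Qed.

Lemma nb_conn : ~~ is_bridge ends e -> connected_net ends [set: V] (delF e).
Proof. by rewrite negbK. Qed.

Lemma re_neqL : ~~ is_bridge ends e -> L - re != 0.
Proof.
move=> nb; apply/negP => /eqP H.
have Z := @hom_zero R V E ends len len_pos [set: V] (delF e) a (J a b)
  (nb_conn nb) (in_setT _).
have Jb : J a b b = 0.
  apply: Z.
  - by rewrite /J; ring.
  - by move=> x; rewrite in_setT.
  - move=> w _; rewrite outflow_del_J; last by left.
    have -> : re = L by apply/eqP; rewrite eq_sym -subr_eq0 H.
    by rewrite divff ?L_neq0 // subrr mulr0.
have : re = 0 by rewrite -Jb /re /J; ring.
move=> re0; move: H; rewrite re0 subr0 => /eqP; by rewrite (negbTE L_neq0).
Qed.

Lemma del_volt z y x : ~~ is_bridge ends e -> (z = a /\ y = b) \/ (z = b /\ y = a) ->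
  voltage ends len [set: V] (delF e) z y x = L / (L - re) * J z y x.
Proof.
move=> nb H.
apply: (@voltage_eq R V E ends len len_pos _ _ _ _ (fun x => L / (L - re) * J z y x)).
- exact: nb_conn.
- exact: in_setT.
split; first by case: H => [[-> ->]|[-> ->]]; rewrite /J; ring.
split; first by move=> u; rewrite in_setT.
move=> w _; rewrite outflow_scale outflow_del_J //.
field; by rewrite L_neq0 re_neqL.
Qed.

Lemma Jsym z y x : J z y x = J z x y.
Proof. by rewrite /J (Gsym y x) (Gsym z x) (Gsym z y); ring. Qed.

Lemma bridge_notab : is_bridge ends e -> ~~ connect (adj ends (delF e)) a b.
Proof.
move=> Hb; apply/negP => Hab; move: Hb; rewrite /is_bridge => /negP; apply.
apply/forallP => x; apply/implyP => _; apply/forallP => y; apply/implyP => _.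
have : connect (adj ends [set: E]) x y.
  by move/forallP: Gconn => /(_ x) /implyP /(_ (in_setT _)) /forallP /(_ y) /implyP /(_ (in_setT _)).
apply: connect_sub => u v /existsP [e' /andP [_ H]].
case: (e' =P e) => [Ee|ne].
  move: H; rewrite Ee => /orP [/andP [/eqP <- /eqP <-] | /andP [/eqP <- /eqP <-]] //.
  by rewrite (sym_connect_sym (@adj_sym V E ends (delF e))).
apply: connect1; apply/existsP; exists e'; rewrite !inE H andbT.
by apply/eqP.
Qed.

Lemma bridge_J : is_bridge ends e ->
  forall x, J a b x = if connect (adj ends (delF e)) a x then 0 else L.
Proof.
move=> Hb x.
set chi := fun x => if connect (adj ends (delF e)) a x then 0 else L.
rewrite -voltG.
apply: (@voltage_eq R V E ends len len_pos _ _ _ _ chi); [exact: Gconn | exact: in_setT |].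
split; first by rewrite /chi connect0.
split; first by move=> u; rewrite in_setT.
move=> w _; rewrite outflow_split.
have -> : outflow ends len (delF e) chi w = 0.
  rewrite /outflow big1 // => e' e'F.
  have Ad : adj ends (delF e) (ends e').1 (ends e').2.
    by apply/existsP; exists e'; rewrite e'F !eqxx.
  have -> : chi (ends e').1 = chi (ends e').2.
    by rewrite /chi (same_connect_r (sym_connect_sym (@adj_sym V E ends (delF e))) (connect1 Ad)).
  by rewrite !subrr !mulr0 addr0 mul0r.
rewrite /chi connect0 (negbTE (bridge_notab Hb)) add0r (eq_sym a) (eq_sym b).
field; exact: L_neq0.
Qed.

Lemma bridge_ab : is_bridge ends e -> a != b.
Proof.
move=> Hb; apply/negP => /eqP ab; move: (bridge_notab Hb); by rewrite ab connect0.
Qed.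

Lemma bridge_re : is_bridge ends e -> re = L.
Proof.
move=> Hb; have -> : re = J a b b by rewrite /re /J; ring.
by rewrite bridge_J // (negbTE (bridge_notab Hb)).
Qed.

Lemma re_ne0 : a != b -> re != 0.
Proof.
move=> ab; apply/negP => /eqP re0.
have En := @energy R V E ends len [set: E] (J a b) (J a b).
have : \sum_w J a b w * ((w == b)%:R - (w == a)%:R) = 0.
  rewrite (eq_bigr (fun w => (b == w)%:R * J a b w - (a == w)%:R * J a b w)); last first.
    by move=> w _; rewrite (eq_sym w) (eq_sym w); ring.
  rewrite sumrB !sum_ind -re0 /re /J; ring.
move=> S0.
have Hn : forall i, i \in [set: E] -> 0 <= (J a b (ends i).1 - J a b (ends i).2) *
    (J a b (ends i).1 - J a b (ends i).2) / len i.
  by move=> e' _; rewrite divr_ge0 -?expr2 ?sqr_ge0 // ltW.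
have S0' : \sum_(i in [set: E]) (J a b (ends i).1 - J a b (ends i).2) *
    (J a b (ends i).1 - J a b (ends i).2) / len i = 0.
  rewrite -En -[RHS]S0; apply: eq_bigr => w _; by rewrite JO.
have D0 : forall e', J a b (ends e').1 = J a b (ends e').2.
  move=> e'; have := psumr_eq0P Hn S0' (in_setT e').
  rewrite -expr2 => /eqP; rewrite mulf_eq0 invr_eq0 (gt_eqF (len_pos e')) orbF sqrf_eq0 subr_eq0.
  by move/eqP.
have := JO a b b; rewrite eqxx eq_sym (negbTE ab) subr0 /outflow big1.
  by move/eqP; rewrite eq_sym oner_eq0.
by move=> e' _; rewrite D0 !subrr !mulr0 addr0 mul0r.
Qed.

Lemma contr_map_id x : x != b -> contr_map ends e x = x.
Proof. by rewrite /contr_map => /negbTE ->. Qed.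

Lemma contr_V_E : a != b -> contr_V ends e = [set~ b].
Proof. by rewrite /contr_V => /negbTE ->. Qed.

Lemma contr_conn : a != b -> connected_net (contr_ends ends e) (contr_V ends e) (delF e).
Proof.
move=> ab; rewrite contr_V_E //.
apply/forallP => x; apply/implyP; rewrite !inE => xb.
apply/forallP => y; apply/implyP; rewrite !inE => yb.
have : connect (adj ends [set: E]) x y.
  by move/forallP: Gconn => /(_ x) /implyP /(_ (in_setT _)) /forallP /(_ y) /implyP /(_ (in_setT _)).
move/(connect_map (f := contr_map ends e) (r2 := adj (contr_ends ends e) (delF e))).
rewrite !contr_map_id //; apply => u v /existsP [e' /andP [_ H]].
case: (e' =P e) => [Ee|ne].
  move: H; rewrite Ee => /orP [/andP [/eqP <- /eqP <-] | /andP [/eqP <- /eqP <-]];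
  by rewrite /contr_map eqxx (negbTE ab) connect0.
apply: connect1; apply/existsP; exists e'; rewrite !inE /contr_ends /=.
have -> : (e' != e) by apply/eqP.
by case/orP: H => /andP [/eqP -> /eqP ->]; rewrite !eqxx ?orbT.
Qed.

Lemma contr_outflow phi w : a != b -> phi a = phi b -> w != b ->
  outflow (contr_ends ends e) len (delF e) phi w =
  outflow ends len [set: E] phi w + (a == w)%:R * outflow ends len [set: E] phi b.
Proof.
move=> ab Hab wb.
have phic : forall v, phi (contr_map ends e v) = phi v.
  by move=> v; rewrite /contr_map; case: eqP => [->|].
have ceq : forall v, ((contr_map ends e v == w)%:R : R) =
    (v == w)%:R + (a == w)%:R * (v == b)%:R.
  move=> v; rewrite /contr_map; case: (v =P b) => [->|nb].
    by rewrite (eq_sym b) (negbTE wb) add0r mulr1.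
  by rewrite mulr0 addr0.
rewrite !outflow_split Hab !subrr !mulr0 !addr0 !mul0r !addr0.
rewrite /outflow /contr_ends /= mulr_sumr -big_split; apply: eq_bigr => e' _.
rewrite !phic !ceq /=; ring.
Qed.

Lemma contr_volt x u : a != b -> x != b ->
  voltage (contr_ends ends e) len (contr_V ends e) (delF e) a x u =
  J a x u - J a x b / re * J a b u.
Proof.
move=> ab xb.
have rn := re_ne0 ab.
have Jbb : J a b b = re by rewrite /re /J; ring.
have U0 : J a x a - J a x b / re * J a b a = 0 by rewrite /J; ring.
have Ub : J a x b - J a x b / re * J a b b = 0.
  by rewrite Jbb divfK // subrr.
apply: (@voltage_eq R V E _ len len_pos _ _ _ _ (fun u => J a x u - J a x b / re * J a b u)).
- exact: contr_conn.
- by rewrite contr_V_E // !inE.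
split => //.
split; first by move=> v; rewrite contr_V_E // !inE negbK => /eqP ->.
move=> w; rewrite contr_V_E // !inE => wb.
rewrite contr_outflow //; last by rewrite U0 Ub.
rewrite !outflow_sub !outflow_scale !JO eqxx (negbTE wb) (eq_sym b a) (negbTE ab).
rewrite (eq_sym b x) (negbTE xb) (eq_sym a w) /=; ring.
Qed.

Lemma contr_sum : a != b ->
  \sum_(x in contr_V ends e) contr_res ends len e x a =
  \sum_x (J a x x - J a x b / re * J a b x).
Proof.
move=> ab.
have rn := re_ne0 ab.
have Jbb : J a b b = re by rewrite /re /J; ring.
rewrite [RHS](bigD1 b) //= Jbb divfK // subrr add0r contr_V_E //.
apply: eq_big => [x|x]; first by rewrite !inE.
rewrite !inE => xb; by rewrite /contr_res /eff_res contr_volt.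
Qed.

Lemma Rdel_E : ~~ is_bridge ends e -> Rdel ends len e = L / (L - re) * re.
Proof. move=> nb; rewrite /Rdel /eff_res del_volt //; by right. Qed.

Lemma Lk : ~~ is_bridge ends e -> L + L / (L - re) * re = L * L / (L - re).
Proof. move=> nb; field; exact: re_neqL. Qed.

Lemma Jba x : J b a x = re - J a b x.
Proof. rewrite /re /J; ring. Qed.

Lemma yA : ytermA ends len e = re ^+ 2 / L.
Proof.
rewrite /ytermA; case: ifP => Hb.
  by rewrite bridge_re // expr2 mulfK // L_neq0.
rewrite Rdel_E ?Hb //.
have h1 := L_neq0; have h2 := re_neqL (negbT Hb).
rewrite (Lk (negbT Hb)); field; by rewrite h1 h2.
Qed.

Lemma yB : ytermB ends len e p = (J a b p - J b a p) ^+ 2 / L.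
Proof.
rewrite /ytermB; case: ifP => Hb.
  rewrite Jba bridge_re // bridge_J //.
  by case: ifP => _; field; exact: L_neq0.
rewrite Rdel_E ?Hb // /Ra /Rb !del_volt ?Hb //; [|by right|by left].
have h1 := L_neq0; have h2 := re_neqL (negbT Hb).
rewrite (Lk (negbT Hb)); field; by rewrite h1 h2.
Qed.

Lemma yC : weight ends len e * \sum_(x in contr_V ends e) contr_res ends len e x a
  = (re * \sum_x J a x x - \sum_x J a b x ^+ 2) / L.
Proof.
have alg : a != b -> re != 0 -> re / L * \sum_x (J a x x - J a x b / re * J a b x)
    = (re * \sum_x J a x x - \sum_x J a b x ^+ 2) / L.
  move=> ab rn; rewrite mulr_sumr [in RHS]mulr_sumr -sumrB mulr_suml; apply: eq_bigr => x _.
  rewrite Jsym; field; by rewrite rn L_neq0.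
rewrite /weight; case: ifP => Hb.
  rewrite mul1r contr_sum ?bridge_ab // -alg ?bridge_ab ?bridge_re ?divff ?mul1r //.
  - exact: L_neq0.
  - by rewrite -(bridge_re Hb) re_ne0 ?bridge_ab.
rewrite Rdel_E ?Hb //.
have h1 := L_neq0; have h2 := re_neqL (negbT Hb).
have -> : L / (L - re) * re / (L + L / (L - re) * re) = re / L.
  rewrite (Lk (negbT Hb)); field; by rewrite h1 h2.
case: (boolP (a == b)) => [/eqP ab | ab].
  have re0 : re = 0 by rewrite /re /J ab; ring.
  rewrite re0 !mul0r sub0r big1 ?oppr0 ?mul0r // => x _.
  by rewrite /J ab subrr sub0r addNr expr2 mul0r.
by rewrite contr_sum // alg // re_ne0.
Qed.

End Edge.


Let g x := G x x.
Let T := \sum_x g x.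

Lemma F1 : \sum_(p0 : V) \sum_(q : V) J q p0 p0 = 2%:R * n * T.
Proof.
have H : forall p0, \sum_q J q p0 p0 = n * g p0 + T.
  move=> p0; rewrite /J.
  rewrite (eq_bigr (fun q => (G p0 p0 - G p0 q) - G p0 q + G q q)); last first.
    by move=> q _; rewrite (Gsym q p0).
  rewrite big_split /= sumrB sumrB Gsum !subr0 sum_cst //.
under eq_bigr do rewrite H.
rewrite big_split /= -mulr_sumr sum_cst /T; ring.
Qed.

Lemma F2 a : \sum_x J a x x = T + n * g a.
Proof.
rewrite /J (eq_bigr (fun x => (g x - G a x) - G a x + g a)); last first.
  by move=> x _; rewrite (Gsym x a).
by rewrite big_split /= !sumrB Gsum !subr0 sum_cst.
Qed.

Lemma F3 : \sum_e re e / len e = n - 1.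
Proof.
have := @trace R V E ends len [set: E] G.
under eq_bigr do rewrite GO eqxx.
rewrite sum_cst (_ : n * (true%:R - n^-1) = n - 1); last by rewrite /= mulrBr mulr1 mulfV ?n_neq0.
move=> H.
rewrite (eq_bigr (fun e => (G (ends e).1 (ends e).1 - G (ends e).1 (ends e).2 +
  G (ends e).2 (ends e).2 - G (ends e).2 (ends e).1) / len e)).
  by rewrite H; apply: eq_bigl => e; rewrite inE.
by move=> e _; rewrite /re /J; congr (_ / _); ring.
Qed.

Let Q := \sum_e (g (ends e).1 - g (ends e).2) ^+ 2 / len e.

Lemma F4 x : \sum_e (J (ends e).1 (ends e).2 x - J (ends e).2 (ends e).1 x) ^+ 2 / len e
  = Q + 4%:R * T / n.
Proof.
pose phi := fun w => g w - 2%:R * G x w.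
have En := @energy R V E ends len [set: E] phi phi.
have O : forall w, outflow ends len [set: E] phi w =
    outflow ends len [set: E] g w - 2%:R * ((w == x)%:R - n^-1).
  by move=> w; rewrite /phi outflow_sub outflow_scale GO.
have HQ := @energy R V E ends len [set: E] g g.
have HG : \sum_w G x w * outflow ends len [set: E] g w = g x - n^-1 * T.
  rewrite energy_sym; under eq_bigr do rewrite GO.
  by rewrite sum_ind3.
have L1 : \sum_w phi w * outflow ends len [set: E] phi w =
   \sum_w g w * outflow ends len [set: E] g w
   - 2%:R * \sum_w G x w * outflow ends len [set: E] g w
   - 2%:R * \sum_w g w * ((w == x)%:R - n^-1)
   + 4%:R * \sum_w G x w * ((w == x)%:R - n^-1).
  rewrite !mulr_sumr -!sumrB -big_split; apply: eq_bigr => w _.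
  rewrite O /phi /=; ring.
rewrite En in L1.
rewrite (eq_bigr (fun e => (phi (ends e).1 - phi (ends e).2) *
    (phi (ends e).1 - phi (ends e).2) / len e)); last first.
  move=> e _; rewrite /phi /J /g (Gsym x (ends e).1) (Gsym x (ends e).2)
    (Gsym (ends e).2 (ends e).1); ring.
rewrite (eq_bigl (fun e => e \in [set: E])); last by move=> e; rewrite inE.
have HQ' : \sum_(e in [set: E]) (g (ends e).1 - g (ends e).2) *
    (g (ends e).1 - g (ends e).2) / len e = Q.
  by rewrite /Q; apply: eq_big => [e|e _]; [rewrite inE | rewrite expr2].
rewrite L1 HG !sum_ind3 Gsum HQ HQ'.
rewrite -/T /g; field; exact: n_neq0.
Qed.

Lemma F5 a b : \sum_x (J a b x - J b a x) = n * (g a - g b).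
Proof.
rewrite (eq_bigr (fun x => 2%:R * G b x - 2%:R * G a x + (g a - g b))); last first.
  by move=> x _; rewrite /J /g (Gsym b a); ring.
by rewrite big_split /= sumrB -!mulr_sumr !Gsum sum_cst; ring.
Qed.

Lemma F6 : \sum_e (g (ends e).1 * (g (ends e).1 - G (ends e).1 (ends e).2) +
   g (ends e).2 * (g (ends e).2 - G (ends e).1 (ends e).2)) / len e = T * (1 - n^-1).
Proof.
have := @trace R V E ends len [set: E] (fun w u => g w * G w u).
under eq_bigr do rewrite outflow_scale GO eqxx.
rewrite -mulr_suml -/T => H.
rewrite (_ : T * (1 - n^-1) = T * (true%:R - n^-1)) // H.
apply: eq_big => [e|e _]; first by rewrite inE.
rewrite /g (Gsym (ends e).2 (ends e).1); ring.
Qed.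


Lemma C_edge e :
  (re e * \sum_x J (ends e).1 x x - \sum_x J (ends e).1 (ends e).2 x ^+ 2) / len e =
  T * (re e / len e) + n * (re e * g (ends e).1 / len e)
  - 4%:R^-1 * ((\sum_x (J (ends e).1 (ends e).2 x - J (ends e).2 (ends e).1 x) ^+ 2) / len e)
  - n / 2%:R * (re e * g (ends e).1 / len e) + n / 2%:R * (re e * g (ends e).2 / len e)
  - n / 4%:R * (re e ^+ 2 / len e).
Proof.
set a := (ends e).1; set b := (ends e).2.
have hx : forall x, J a b x ^+ 2 = 4%:R^-1 * (J a b x - J b a x) ^+ 2 +
    re e / 2%:R * (J a b x - J b a x) + re e ^+ 2 / 4%:R.
  by move=> x; rewrite (Jba e x) -/a -/b; field.
rewrite F2 (eq_bigr _ (fun x _ => hx x)) !big_split -!mulr_sumr F5 !sum_cst.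
have := L_neq0 e; rewrite -/a -/b => hL.
clear hx; rewrite /= /g /T {}/a {}/b; field; by rewrite ?hL.
Qed.

Lemma QBC : Q + \sum_e re e * g (ends e).1 / len e + \sum_e re e * g (ends e).2 / len e
  = 2%:R * T * (1 - n^-1).
Proof.
rewrite /Q -!big_split /= -mulrA -F6 mulr_sumr; apply: eq_bigr => e _.
rewrite /re /J /g (Gsym (ends e).2 (ends e).1); field; exact: L_neq0.
Qed.

Lemma main_eq :
  2%:R * Kf ends len =
    #|V|%:R * y_inv ends len p
    + \sum_(e : E) weight ends len e *
        \sum_(x in contr_V ends e) contr_res ends len e x (ends e).1.
Proof.
rewrite /Kf /y_inv.
rewrite (eq_bigr (fun p0 => \sum_q J q p0 p0)); last first.
  by move=> p0 _; apply: eq_bigr => q _; rewrite effG.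
rewrite F1 (eq_bigr _ (fun e _ => yA e)) (eq_bigr _ (fun e _ => yB e))
  (eq_bigr _ (fun e _ => yC e)) (eq_bigr _ (fun e _ => C_edge e)).
have Dsum : \sum_i ((\sum_x (J (ends i).1 (ends i).2 x - J (ends i).2 (ends i).1 x) ^+ 2)
    / len i) = n * (Q + 4%:R * T / n).
  under eq_bigr => i _ do rewrite mulr_suml.
  rewrite exchange_big /=.
  under eq_bigr => x _ do rewrite F4.
  by rewrite sum_cst.
rewrite !big_split /= !sumrN -!mulr_sumr F3 Dsum.
rewrite F4.
set A := \sum_i re i ^+ 2 / len i.
set B := \sum_i re i * g (ends i).1 / len i.
set C := \sum_i re i * g (ends i).2 / len i.
have H : Q + B + C = 2%:R * T * (1 - n^-1) by exact: QBC.
clearbody A B C.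
rewrite -/n.
have hn := n_neq0.
move: hn H; generalize n T Q => n0 T0 Q0 hn H.
have -> : B = 2%:R * T0 * (1 - n0^-1) - Q0 - C by rewrite -H; ring.
by field.
Qed.

End Main.

Theorem proposition3p6 (R : realType) (V E : finType)
    (ends : E -> V * V) (len : E -> R)
    (len_pos : forall e, 0 < len e)
    (Gconn : connected_net ends [set: V] [set: E])
    (p : V) :
  2%:R * Kf ends len =
    #|V|%:R * y_inv ends len p
    + \sum_(e : E) weight ends len e *
        \sum_(x in contr_V ends e) contr_res ends len e x (ends e).1.
Proof. exact: (main_eq len_pos Gconn p). Qed.
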